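(* Let $n$ training samples carry labels in $\{1,\dots,K\}$ with indicator matrix $F\in\mathbb{R}^{K\times n}$. Let the basis $G_1,\dots,G_r$ ($r\le n$) be a subset of the training samples such that every class contains at least one basis vector, and let $F_{G_i}$ be the indicator vector of the class of $G_i$. Let $W\in\mathbb{R}^{r\times n}$ be an entrywise nonnegative similarity matrix with all column sums positive, $S=\operatorname{diag}(\mathbf{1}^TW)$, $\tilde W=WS^{-1}$, and assume $\tilde W$ has full row rank. Let $X^*=F\tilde W^T(\tilde W\tilde W^T)^{-1}$. If $W$ satisfies the ideal bipartite-graph condition, i.e. $W_{ij}=0$ whenever $F_{G_i}\neq F_j$, then the rows of $F$ lie in the row space of $\tilde W$ and zero fitting error is achieved: $F=X^*\tilde W$.
   Context: The columns of $F$ are standard basis vectors of $\mathbb{R}^K$: $F_j=e_k$ iff sample $j$ is in class $k$. $W_{ij}$ is the similarity between basis vector $G_i$ and training sample $j$. $X^*$ is the minimizer of $\|F-X\tilde W\|_F^2$ (normalized RBF network). *)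

(* Defs.v *)
From HB Require Import structures.
From mathcomp Require Import all_boot all_order all_algebra.
Set Implicit Arguments. Unset Strict Implicit. Unset Printing Implicit Defensive.
Import Order.TTheory GRing.Theory Num.Theory.
Local Open Scope ring_scope.

Definition indicator_mx (R : nzRingType) (K n : nat) (lab : 'I_n -> 'I_K)
  : 'M[R]_(K, n) := \matrix_(k < K, j < n) (lab j == k)%:R.

Definition colsum_diag (R : nzRingType) (r n : nat) (W : 'M[R]_(r, n))
  : 'M[R]_n := diag_mx (\row_(j < n) \sum_(i < r) W i j).

Definition normalized_W (R : fieldType) (r n : nat) (W : 'M[R]_(r, n))
  : 'M[R]_(r, n) := W *m invmx (colsum_diag W).

Definition Xstar (R : fieldType) (K r n : nat) (F : 'M[R]_(K, n))
  (Wt : 'M[R]_(r, n)) : 'M[R]_(K, r) :=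
  F *m Wt^T *m invmx (Wt *m Wt^T).

(* Main.v *)
Require Import Defs.
From HB Require Import structures.
From mathcomp Require Import all_boot all_order all_algebra.
Import Order.TTheory GRing.Theory Num.Theory.
Local Open Scope ring_scope.

Lemma AAt_unit (R : realFieldType) (r n : nat) (A : 'M[R]_(r, n)) :
  row_free A -> A *m A^T \in unitmx.
Proof.
move=> fA; rewrite unitmxE unitfE; apply/negP => /det0P [v vn0 hv].
have h0 : (v *m A) *m (v *m A)^T = 0.
  by rewrite trmx_mul mulmxA -(mulmxA v) hv mul0mx.
have: v *m A = 0.
  apply/matrixP => i j; rewrite ord1 [RHS]mxE.
  have hs : \sum_(k < n) (v *m A) 0 k * (v *m A)^T k 0 = 0.
    by move: (congr1 (fun M : 'M[R]_(1,1) => M 0 0) h0); rewrite !mxE.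
  have H := psumr_eq0P _ hs.
  apply/eqP; rewrite -sqrf_eq0; apply/eqP.
  have := H _ j isT; rewrite [X in _ * X]mxE -expr2; apply.
  by move=> k _; rewrite [X in _ * X]mxE -expr2 sqr_ge0.
move=> hvA; apply/negP: vn0; rewrite negbK; apply/eqP.
by apply: (row_free_inj fA); rewrite hvA mul0mx.
Qed.

Theorem theorem2 (R : realFieldType) (K n r : nat)
  (lab : 'I_n -> 'I_K)            (* labels of the n training samples *)
  (g : 'I_r -> 'I_n)              (* basis G_i = training sample g i *)
  (W : 'M[R]_(r, n)) :
  injective g ->                                   (* basis is a subset, r <= n *)
  (forall k : 'I_K, exists i : 'I_r, lab (g i) = k) -> (* every class has a basis vector *)
  (forall i j, 0 <= W i j) ->
  (forall j : 'I_n, 0 < \sum_(i < r) W i j) ->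
  row_free (normalized_W W) ->                    (* W~ has full row rank *)
  (forall i j, lab (g i) != lab j -> W i j = 0) -> (* ideal bipartite graph *)
  ((indicator_mx R lab <= normalized_W W)%MS /\
   indicator_mx R lab =
     Xstar (indicator_mx R lab) (normalized_W W) *m normalized_W W).
Proof.
move=> _ _ _ spos fW ideal.
set s := fun j => \sum_(i < r) W i j.
set E : 'M[R]_n := diag_mx (\row_j (s j)^-1).
have DE : colsum_diag W *m E = 1%:M.
  rewrite /colsum_diag /E mulmx_diag -diag_const_mx; congr diag_mx.
  by apply/matrixP => i j; rewrite !mxE mulfV // gt_eqF.
have uD : colsum_diag W \in unitmx by case: (mulmx1_unit DE).
have iD : invmx (colsum_diag W) = E.
  by rewrite -[E](mulKmx uD) DE mulmx1.
have WtE : normalized_W W = \matrix_(i, j) (W i j * (s j)^-1).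
  by rewrite /normalized_W iD /E mul_mx_diag; apply/matrixP => i j; rewrite !mxE.
set C : 'M[R]_(K, r) := \matrix_(k, i) (lab (g i) == k)%:R.
have FC : indicator_mx R lab = C *m normalized_W W.
  apply/matrixP => k j; rewrite WtE !mxE.
  under eq_bigr => i _ do rewrite !mxE.
  have -> : \sum_(i < r) (lab (g i) == k)%:R * (W i j * (s j)^-1)
          = (lab j == k)%:R * s j * (s j)^-1.
    under eq_bigr => i _ do rewrite mulrA.
    rewrite -mulr_suml; congr (_ * _); rewrite /s mulr_sumr; apply: eq_bigr => i _.
    case: (eqVneq (lab (g i)) (lab j)) => [-> // | ne].
    by rewrite ideal // mulr0; case: (lab (g i) == k); case: (lab j == k); rewrite ?mul0r ?mulr0.
  by rewrite -mulrA mulfV ?mulr1 // gt_eqF // spos.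
split; first by rewrite FC submxMl.
rewrite /Xstar FC; move: (normalized_W W) fW => Wt fWt.
have uA := @AAt_unit _ _ _ _ fWt.
by rewrite -!mulmxA (mulmxA Wt) (mulmxA (Wt *m Wt^T)) mulmxV // mul1mx.
Qed.
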